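(* Let $f:2^N\to\mathbb R$ be an additive function with $v_{\max}=\max_i f(\{e_i\})$ and $v_{\min}=\min_i f(\{e_i\})$, and let $\mathcal D$ be a product distribution on $2^N$ with bounded marginals. If $v_{\min}\ge v_{\max}/\mathrm{poly}(n)$, then $f$ is recoverable for $\mathcal D$.
   Context: $N=\{e_1,\dots,e_n\}$. $f$ is additive if $f(S)=\sum_{e_i\in S}f(\{e_i\})$. A product distribution includes each element independently; bounded marginals means for every $e$, $\Pr[e\in S]$ and $\Pr[e\notin S]$ ($S\sim\mathcal D$) lie between $1/\mathrm{poly}(n)$ and $1-1/\mathrm{poly}(n)$. $f$ is recoverable for $\mathcal D$ if there is an algorithm which, given polynomially many samples $(S_i,f(S_i))$ with $S_i$ i.i.d. from $\mathcal D$, outputs $\tilde f$ with $(1-1/n^2)f(S)\le\tilde f(S)\le(1+1/n^2)f(S)$ for all $S\subseteq N$, with probability at least $1-\delta$ over the samples and the algorithm's randomness, for a constant $\delta\in[0,1)$. *)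

(* Defs.v *)
From HB Require Import structures.
From mathcomp Require Import all_boot all_order all_algebra.
From mathcomp Require Import reals.
Set Implicit Arguments. Unset Strict Implicit. Unset Printing Implicit Defensive.
Import Order.TTheory GRing.Theory Num.Theory.
Local Open Scope ring_scope.

Section Defs.
Variable R : realType.

Definition additive_setfun n (f : {set 'I_n} -> R) : Prop :=
  forall S : {set 'I_n}, f S = \sum_(i in S) f [set i].

Definition prod_dist n (p : 'I_n -> R) (S : {set 'I_n}) : R :=
  \prod_(i < n) (if i \in S then p i else 1 - p i).

Definition is_marginals n (p : 'I_n -> R) : Prop :=
  forall i, 0 <= p i <= 1.

(* bounded marginals w.r.t. the polynomial value P = poly(n) *)
Definition bounded_marginals n (p : 'I_n -> R) (P : R) : Prop :=
  forall i, (1 / P <= p i <= 1 - 1 / P) /\ (1 / P <= 1 - p i <= 1 - 1 / P).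

Definition poly_bounded (g : nat -> R) : Prop :=
  exists (c : R) (k : nat), forall n, g n <= c * (n%:R + 1) ^+ k.

Definition approximates n (f g : {set 'I_n} -> R) (eps : R) : bool :=
  [forall S : {set 'I_n}, ((1 - eps) * f S <= g S) && (g S <= (1 + eps) * f S)].

(* a (randomized) learner: given the labelled samples and a uniformly
   random tape of r bits, outputs a set function *)
Definition learner n r := seq ({set 'I_n} * R) -> {ffun 'I_r -> bool} -> {set 'I_n} -> R.

Definition success_prob n m r (p : 'I_n -> R) (f : {set 'I_n} -> R)
    (A : learner n r) : R :=
  \sum_(X : m.-tuple {set 'I_n}) \sum_(w : {ffun 'I_r -> bool})
    ((\prod_(j < m) prod_dist p (tnth X j)) * (2 ^- r) *
     (if approximates f (A [seq (T, f T) | T <- X] w) (1 / (n%:R ^+ 2))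
      then 1 else 0)).

End Defs.

(* Main.v *)
Require Import Defs.
From HB Require Import structures.
From mathcomp Require Import all_boot all_order all_algebra.
From mathcomp Require Import reals ring lra.
From Stdlib Require Import ClassicalEpsilon.
Set Implicit Arguments. Unset Strict Implicit. Unset Printing Implicit Defensive.
Import Order.TTheory GRing.Theory Num.Theory.
Local Open Scope ring_scope.



Section LinAlg.
Variable R : realType.
Variable n : nat.

Definition vec (T : {set 'I_n}) : 'rV[R]_n := \row_i (if i \in T then 1 else 0).
Fixpoint Vs (s : seq {set 'I_n}) : 'M[R]_n :=
  if s is T :: s' then (vec T + Vs s')%MS else 0.
Definition rk s := \rank (Vs s).

Lemma Vs_sub s m (B : 'M[R]_(m, n)) :
  (Vs s <= B)%MS = all (fun T => vec T <= B)%MS s.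
Proof. elim: s => [|T s IH] /=; first by rewrite sub0mx. by rewrite addsmx_sub IH. Qed.

Lemma vec_Vs T s : T \in s -> (vec T <= Vs s)%MS.
Proof. move=> Ts; have := submx_refl (Vs s); rewrite Vs_sub => /allP; exact. Qed.

Lemma rk_eq s1 s2 : s1 =i s2 -> rk s1 = rk s2.
Proof.
move=> e; apply/eqP; rewrite eqn_leq /rk; apply/andP; split; apply: mxrankS;
  rewrite Vs_sub; apply/allP => T Ts; apply: vec_Vs; by rewrite ?e // -e.
Qed.

Lemma rk_le s : (rk s <= n)%N.
Proof. exact: rank_leq_col. Qed.

Lemma rk_cons T s : rk (T :: s) = if (vec T <= Vs s)%MS then rk s else (rk s).+1.
Proof.
rewrite /rk /=; case: ifP => h.
  by apply: eqmx_rank; apply/eqmxP; apply/addsmx_idPr.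
apply/eqP; rewrite eqn_leq; apply/andP; split.
  have := (mxrank_adds_leqif (vec T) (Vs s)) => -[+ _].
  move=> H; apply: (leq_trans H); rewrite -[X in (_ <= X)%N]add1n leq_add2r.
  have := rank_leq_row (vec T); by [].
apply: rank_ltmx; rewrite ltmxE addsmxSr /=.
by apply/negP => H; move: h; rewrite (submx_trans (addsmxSl _ _) H).
Qed.


End LinAlg.
Lemma vec_mul (R : realType) n (T : {set 'I_n}) (c : 'cV[R]_n) :
  (vec R T *m c) 0 0 = \sum_(i in T) c i 0.
Proof.
rewrite !mxE [RHS]big_mkcond /=; apply: eq_bigr => i _; rewrite mxE.
by case: (i \in T); rewrite ?mul1r ?mul0r.
Qed.



Section Prob.
Variable R : realType.
Variable n : nat.
Variable p : 'I_n -> R.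

Definition Dm (T : {set 'I_n}) j := \prod_(i | i != j) (if i \in T then p i else 1 - p i).

Lemma D_ge0 T : is_marginals p -> 0 <= prod_dist p T.
Proof.
move=> hp; rewrite /prod_dist; apply: prodr_ge0 => i _.
by case: (hp i) => /andP[h0 h1]; case: (i \in T); rewrite ?subr_ge0.
Qed.

Lemma Dm_ge0 T j : is_marginals p -> 0 <= Dm T j.
Proof.
move=> hp; rewrite /Dm; apply: prodr_ge0 => i _.
by case: (hp i) => /andP[h0 h1]; case: (i \in T); rewrite ?subr_ge0.
Qed.

Lemma D_sum1 : \sum_(T : {set 'I_n}) prod_dist p T = 1.
Proof.
have e : \prod_(i < n) \sum_(b : bool) (if b then p i else 1 - p i) = 1.
  rewrite big1 // => i _; rewrite big_bool /=; by rewrite addrC subrK.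
rewrite -e bigA_distr_bigA /=.
rewrite (reindex (fun T : {set 'I_n} => [ffun i => i \in T])) /=.
  apply: eq_bigr => T _; rewrite /prod_dist; apply: eq_bigr => i _.
  by rewrite ffunE.
exists (fun f : {ffun 'I_n -> bool} => [set i | f i]) => [T _|f _].
  by apply/setP => i; rewrite inE ffunE.
by apply/ffunP => i; rewrite ffunE inE.
Qed.

Definition tog j (T : {set 'I_n}) := if j \in T then T :\ j else j |: T.

Lemma togK j : involutive (tog j).
Proof.
move=> T; rewrite /tog; case: (boolP (j \in T)) => h.
  by rewrite setD11 setD1K.
by rewrite setU11 setU1K.
Qed.

Lemma Dm_add j T : Dm (j |: T) j = Dm T j.
Proof.
rewrite /Dm; apply: eq_bigr => i ij; rewrite !inE (negbTE ij) //.
Qed.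

Lemma D_decomp (j : 'I_n) T :
  prod_dist p T = (if j \in T then p j else 1 - p j) * Dm T j.
Proof. by rewrite /prod_dist (bigD1 j). Qed.

Lemma D_split (j : 'I_n) (g : {set 'I_n} -> R) :
  \sum_(T : {set 'I_n}) prod_dist p T * g T =
  \sum_(T : {set 'I_n} | j \notin T) Dm T j * ((1 - p j) * g T + p j * g (j |: T)).
Proof.
rewrite (bigID (fun T : {set 'I_n} => j \in T)) /=.
rewrite (reindex (tog j)) /=; last by exists (tog j) => T _; rewrite togK.
rewrite (eq_big (fun T : {set 'I_n} => j \notin T) (fun T : {set 'I_n} => prod_dist p (j |: T) * g (j |: T))).
- rewrite addrC -big_split /=; apply: eq_bigr => T jT.
  rewrite (D_decomp j T) (D_decomp j (j |: T)) Dm_add setU11 (negbTE jT).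
  ring.
- by move=> T; rewrite /tog; case: (boolP (j \in T)) => h; rewrite ?setD11 ?setU11.
- by move=> T; rewrite /tog; case: (boolP (j \in T)) => h //; rewrite setD11.
Qed.

Lemma Dm_sum1 (j : 'I_n) : \sum_(T : {set 'I_n} | j \notin T) Dm T j = 1.
Proof.
rewrite -D_sum1.
have := D_split j (fun _ => 1); rewrite (eq_bigr (fun T => prod_dist p T)); last by move=> *; rewrite mulr1.
move=> ->; apply: eq_bigr => T _; by rewrite !mulr1 subrK mulr1.
Qed.

End Prob.



Section Key.
Variable R : realType.
Variable n : nat.
Variable p : 'I_n -> R.
Hypothesis hp : is_marginals p.

Lemma pair_bound (j : 'I_n) (c : 'I_n -> R) (q : R) :
  c j != 0 -> p j <= 1 - q -> 1 - p j <= 1 - q ->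
  \sum_(T : {set 'I_n}) prod_dist p T * (if \sum_(i in T) c i == 0 then 1 else 0) <= 1 - q.
Proof.
move=> cj h1 h2; rewrite (D_split p j).
apply: (@le_trans _ _ (\sum_(T : {set 'I_n} | j \notin T) Dm p T j * (1 - q))); last first.
  by rewrite -big_distrl /= Dm_sum1 mul1r.
apply: ler_sum => T jT; apply: ler_wpM2l; first exact: Dm_ge0.
rewrite big_setU1 //=.
case: (hp j) => /andP[h0 h1'].
case: eqP => ha; case: eqP => hb.
- by move: cj; rewrite -hb ha addr0 eqxx.
- lra.
- lra.
- lra.
Qed.

Lemma coker_entry m (A : 'M[R]_(m, n)) : (\rank A < n)%N ->
  exists j l, cokermx A j l != 0.
Proof.
move=> h; case: (boolP [exists j, exists l, cokermx A j l != 0]).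
  by move=> /existsP[j /existsP[l hl]]; exists j, l.
rewrite negb_exists => /forallP H0.
suff e : cokermx A = 0.
  have := mxrank_coker A; rewrite e mxrank0 => /eqP; rewrite eq_sym subn_eq0.
  by rewrite leqNgt h.
apply/matrixP => j l; rewrite [RHS]mxE; have := H0 j; rewrite negb_exists => /forallP /(_ l).
by rewrite negbK => /eqP.
Qed.

Lemma vecM_entry (T : {set 'I_n}) (C : 'M[R]_n) l :
  (vec R T *m C) 0 l = \sum_(i in T) C i l.
Proof.
rewrite !mxE [RHS]big_mkcond /=; apply: eq_bigr => i _; rewrite mxE.
by case: (i \in T); rewrite ?mul1r ?mul0r.
Qed.

Variable q : R.
Hypothesis hq : forall j, p j <= 1 - q /\ 1 - p j <= 1 - q.

Lemma inV_bound s : (rk R s < n)%N ->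
  \sum_(T : {set 'I_n}) prod_dist p T * (if (vec R T <= Vs R s)%MS then 1 else 0) <= 1 - q.
Proof.
move=> h; have [j [l hjl]] := coker_entry h.
have [h1 h2] := hq j.
apply: le_trans (pair_bound (c := fun i => cokermx (Vs R s) i l) hjl h1 h2).
apply: ler_sum => T _; apply: ler_wpM2l; first exact: D_ge0.
case: (boolP (vec R T <= Vs R s)%MS) => hv; last by case: eqP.
move/submxP: hv => [D hD].
have : (vec R T *m cokermx (Vs R s)) 0 l = 0.
  by rewrite hD -mulmxA mulmx_coker mulmx0 mxE.
by rewrite vecM_entry => ->; rewrite eqxx.
Qed.

Definition Phi (s : seq {set 'I_n}) : R :=
  if (rk R s < n)%N then 2 ^+ (n - rk R s) else 0.

Lemma Phi_ge0 s : 0 <= Phi s.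
Proof. rewrite /Phi; case: ifP => // _; exact: exprn_ge0. Qed.

Lemma trans_bound s : 0 <= q ->
  \sum_(T : {set 'I_n}) prod_dist p T * Phi (T :: s) <= (1 - q / 2) * Phi s.
Proof.
move=> q0.
case: (ltnP (rk R s) n) => hs; last first.
  have hs' : rk R s = n by apply/eqP; rewrite eqn_leq rk_le hs.
  rewrite big1; first by rewrite /Phi hs' ltnn mulr0.
  move=> T _; rewrite /Phi rk_cons ifF ?mulr0 //; apply/negbTE; rewrite -leqNgt; case: ifP => _; rewrite hs' ?leqnSn //.
set a : R := 2 ^+ (n - rk R s).-1.
have ePhi : Phi s = 2 * a.
  by rewrite /Phi hs /a -exprS prednK // subn_gt0.
have hb : forall T, Phi (T :: s) <= a + a * (if (vec R T <= Vs R s)%MS then 1 else 0).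
  move=> T; rewrite /Phi rk_cons; case: (boolP (vec R T <= Vs R s)%MS) => hv.
    have e : (2:R) ^+ (n - rk R s) = 2 * a by rewrite -ePhi /Phi hs.
    rewrite hs mulr1 e; lra.
  rewrite mulr0 addr0; case: ifP => h2; last exact: exprn_ge0.
  by rewrite /a subnS.
have a0 : 0 <= a by exact: exprn_ge0.
apply: (@le_trans _ _ (\sum_(T : {set 'I_n}) prod_dist p T * (a + a * (if (vec R T <= Vs R s)%MS then 1 else 0)))).
  by apply: ler_sum => T _; apply: ler_wpM2l; [exact: D_ge0|exact: hb].
under eq_bigr => T _ do rewrite mulrDr [a * _]mulrC mulrA.
rewrite big_split /= -!big_distrl /= D_sum1 mul1r.
have := inV_bound hs => hI.
rewrite ePhi.
have : (\sum_(T : {set 'I_n}) prod_dist p T * (if (vec R T <= Vs R s)%MS then 1 else 0)) * a <= (1 - q) * a.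
  exact: ler_wpM2r.
lra.
Qed.

End Key.



Section Tup.
Variable R : realType.
Variable n : nat.
Variable p : 'I_n -> R.

Definition E m (F : seq {set 'I_n} -> R) : R :=
  \sum_(X : m.-tuple {set 'I_n}) (\prod_(j < m) prod_dist p (tnth X j)) * F X.

Lemma E0 F : E 0 F = F [::].
Proof.
rewrite /E (big_pred1 [tuple]) => [|X]; last by rewrite [X]tuple0 /= eqxx.
by rewrite big_ord0 mul1r.
Qed.

Lemma E_cons m F :
  E m.+1 F = \sum_(T : {set 'I_n}) prod_dist p T * E m (fun X => F (T :: X)).
Proof.
rewrite /E; symmetry.
under eq_bigr => T _ do rewrite big_distrr /=.
rewrite pair_big /=.
rewrite (reindex (fun t : m.+1.-tuple {set 'I_n} => (thead t, [tuple of behead t]))) /=.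
  apply: eq_bigr => t _.
  rewrite big_ord_recl mulrA; congr (_ * _ * _).
  - apply: eq_bigr => i _.
    rewrite tnth_behead; congr (prod_dist p (tnth t _)).
    by apply: val_inj; rewrite /= inordK // ltnS.
  - by rewrite [in RHS](tuple_eta t).
exists (fun pr : {set 'I_n} * m.-tuple {set 'I_n} => [tuple of pr.1 :: pr.2]).
  by move=> t _; rewrite -tuple_eta.
by move=> [T X] _ /=; rewrite theadE; congr (_, _); apply: val_inj.
Qed.

Hypothesis hp : is_marginals p.

Lemma E_mono m F G : (forall X, F X <= G X) -> E m F <= E m G.
Proof.
move=> h; apply: ler_sum => X _; apply: ler_wpM2l => //.
by apply: prodr_ge0 => j _; exact: D_ge0.
Qed.

Lemma E_const m c : E m (fun _ => c) = c.
Proof.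
elim: m => [|m IH]; first by rewrite E0.
rewrite E_cons; under eq_bigr => T _ do rewrite IH.
by rewrite -big_distrl /= D_sum1 mul1r.
Qed.

Lemma E_sub m F G : E m (fun X => F X - G X) = E m F - E m G.
Proof.
rewrite /E -sumrB; apply: eq_bigr => X _; by rewrite mulrBr.
Qed.

Lemma E_ext m F G : (forall X, F X = G X) -> E m F = E m G.
Proof. by move=> h; apply: eq_bigr => X _; rewrite h. Qed.

Variable q : R.
Hypothesis q1 : q <= 1.
Hypothesis hq : forall j, p j <= 1 - q /\ 1 - p j <= 1 - q.
Hypothesis q0 : 0 <= q.

Lemma E_phi m : forall s, E m (fun X => Phi R (X ++ s)) <= (1 - q / 2) ^+ m * Phi R s.
Proof.
elim: m => [|m IH] s; first by rewrite E0 expr0 mul1r.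
rewrite E_cons.
apply: (@le_trans _ _ (\sum_(T : {set 'I_n}) prod_dist p T * ((1 - q / 2) ^+ m * Phi R (T :: s)))).
  apply: ler_sum => T _; apply: ler_wpM2l; first exact: D_ge0.
  rewrite (@E_ext m _ (fun X => Phi R (X ++ T :: s))).
    exact: IH.
  move=> X; rewrite /Phi (@rk_eq R n ((T :: X) ++ s) (X ++ T :: s)) //.
    by move=> U; rewrite cat_cons in_cons !mem_cat in_cons orbCA.
under eq_bigr => T _ do rewrite mulrCA.
rewrite -big_distrr /= exprSr -mulrA; apply: ler_wpM2l.
  apply: exprn_ge0; rewrite subr_ge0 ler_pdivrMr // mul1r; apply: (le_trans q1); by rewrite ler1n.
exact: trans_bound.
Qed.

End Tup.



Definition consistent (R : realType) n (smp : seq ({set 'I_n} * R)) (w : 'cV[R]_n) : Prop :=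
  forall x, x \in smp -> \sum_(i in x.1) w i 0 = x.2.

Definition learn (R : realType) n (smp : seq ({set 'I_n} * R)) : 'cV[R]_n :=
  epsilon (inhabits 0) (consistent smp).

Definition Alg (R : realType) n : learner R n 0 :=
  fun smp _ S => \sum_(i in S) learn smp i 0.

Lemma learn_correct (R : realType) n (f : {set 'I_n} -> R) (X : seq {set 'I_n}) w eps :
  additive_setfun f -> (forall i, 0 <= f [set i]) -> 0 <= eps ->
  ~~ (rk R X < n)%N ->
  approximates f (Alg [seq (T, f T) | T <- X] w) eps.
Proof.
move=> hf hf0 he hX.
set smp := [seq (T, f T) | T <- X].
pose wf : 'cV[R]_n := \col_i f [set i].
have cwf : consistent smp wf.
  move=> x /mapP [T TX ->] /=; rewrite hf; apply: eq_bigr => i _; by rewrite mxE.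
have cw : consistent smp (learn smp) by apply: epsilon_spec; exists wf.
set c := learn smp - wf.
have hc : forall T, T \in X -> (vec R T *m c) 0 0 = 0.
  move=> T TX; rewrite vec_mul.
  have e1 := cw (T, f T) (map_f _ TX); have e2 := cwf (T, f T) (map_f _ TX).
  rewrite /= in e1 e2.
  rewrite /c; under eq_bigr => i _ do rewrite !mxE.
  rewrite sumrB e1 -e2; apply/eqP; rewrite subr_eq0; apply/eqP; apply: eq_bigr => i _; by rewrite mxE.
have full : row_full (Vs R X).
  by rewrite /row_full; rewrite -leqNgt in hX; rewrite eqn_leq rank_leq_col hX.
have hk : (Vs R X <= kermx c)%MS.
  rewrite Vs_sub; apply/allP => T TX; apply/sub_kermxP.
  by rewrite [vec R T *m c]mx11_scalar hc //; apply/matrixP => i j; rewrite !mxE; by case: (i == j).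
have c0 : c = 0.
  have : (1%:M <= kermx c)%MS by apply: submx_trans hk; rewrite sub1mx.
  by move/sub_kermxP; rewrite mul1mx.
have ew : learn smp = wf by apply/eqP; rewrite -subr_eq0 -/c c0.
apply/forallP => S; rewrite /Alg ew.
have -> : \sum_(i in S) wf i 0 = f S by rewrite hf; apply: eq_bigr => i _; rewrite mxE.
have fS : 0 <= f S by rewrite hf; apply: sumr_ge0.
apply/andP; split; nra.
Qed.



Lemma bern (R : realType) (x : R) M : 0 <= x -> x <= 1 -> (1 - x) ^+ M * (1 + M%:R * x) <= 1.
Proof.
move=> x0 x1; elim: M => [|M IH]; first by rewrite expr0 mul0r addr0 mulr1.
have h0 : 0 <= (1 - x) ^+ M by apply: exprn_ge0; lra.
rewrite exprSr -mulrA; apply: le_trans IH; apply: ler_wpM2l => //.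
rewrite -natr1; have hM : 0 <= M%:R :> R by [].
nra.
Qed.

Lemma powbound (R : realType) (x : R) M k : 0 <= x -> x <= 1 -> 1 <= M%:R * x ->
  (1 - x) ^+ (M * k) * 2 ^+ k <= 1.
Proof.
move=> x0 x1 hM.
have hb := bern M x0 x1.
have hl : (1 - x) ^+ M * 2 <= 1.
  apply: le_trans hb; apply: ler_wpM2l; first by apply: exprn_ge0; lra.
  lra.
elim: k => [|k IH]; first by rewrite muln0 !expr0 mulr1.
rewrite mulnS exprD exprS.
have h1 : 0 <= (1 - x) ^+ (M * k) by apply: exprn_ge0; lra.
have h2 : 0 <= (1 - x) ^+ M by apply: exprn_ge0; lra.
have h3 : 0 <= (2:R) ^+ k by apply: exprn_ge0.
nra.
Qed.



Theorem lemma6 (R : realType) (pm pv : nat -> R) :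
  poly_bounded pm -> (forall n, 1 <= pm n) ->
  poly_bounded pv -> (forall n, 1 <= pv n) ->
  exists delta : R, 0 <= delta < 1 /\
  exists (m r : nat -> nat),
    poly_bounded (fun n => (m n)%:R : R) /\ poly_bounded (fun n => (r n)%:R : R) /\
  exists A : forall n, learner R n (r n),
  forall (n : nat) (f : {set 'I_n} -> R) (p : 'I_n -> R),
    additive_setfun f ->
    (forall i, 0 <= f [set i]) ->
    (forall i j : 'I_n, f [set j] / pv n <= f [set i]) ->
    is_marginals p ->
    bounded_marginals p (pm n) ->
    1 - delta <= success_prob (m n) p f (A n).
Proof.
move=> [c [k hc]] hpm1 _ _.
set C := Num.Def.archi_bound `|c|.
have hcC : c <= C%:R.
  apply: (le_trans (ler_norm c)); apply: ltW; exact: archi_boundP.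
exists (1/2); split; first by apply/andP; split; lra.
exists (fun n => (2 * C * n.+1 ^ k * n.+1)%N), (fun _ => 0%N).
split.
  exists (2 * C)%:R, k.+1 => n.
  by rewrite !natrM natrX -mulrA -exprSr natr1.
split; first by exists 0, 0%N => n; rewrite mul0r.
exists (fun n => @Alg R n) => n f p hf hf0 _ hp hb.
set P := pm n.
have P1 : 1 <= P := hpm1 n.
have P0 : 0 < P by apply: lt_le_trans P1.
set q := 1 / P.
have q0 : 0 <= q by rewrite /q divr_ge0 // ltW.
have q1 : q <= 1 by rewrite /q ler_pdivrMr // mul1r.
have hq : forall j, p j <= 1 - q /\ 1 - p j <= 1 - q.
  by move=> j; case: (hb j) => /andP[_ ?] /andP[_ ?].
set M := (2 * C * n.+1 ^ k)%N.
have hMx : 1 <= M%:R * (q / 2).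
  have hP : P <= C%:R * (n.+1)%:R ^+ k.
    apply: (le_trans (hc n)); rewrite natr1; apply: ler_wpM2r => //.
    by apply: exprn_ge0.
  rewrite /M !natrM natrX /q.
  have -> : 2 * C%:R * (n.+1)%:R ^+ k * (1 / P / 2) = C%:R * (n.+1)%:R ^+ k / P.
    by field; rewrite gt_eqF.
  by rewrite ler_pdivlMr // mul1r.
set eps : R := 1 / (n%:R ^+ 2).
have eps0 : 0 <= eps by rewrite /eps divr_ge0 // exprn_ge0.
set w0 : {ffun 'I_0 -> bool} := [ffun i => false].
have -> : success_prob (M * n.+1) p f (Alg (n:=n)) =
  E p (M * n.+1) (fun X => if approximates f (Alg [seq (T, f T) | T <- X] w0) eps then 1 else 0).
  rewrite /success_prob /E; apply: eq_bigr => X _.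
  rewrite (eq_bigr (fun _ => (\prod_(j < M * n.+1) prod_dist p (tnth X j)) * 2 ^- 0 *
      (if approximates f (Alg [seq (T, f T) | T <- X] w0) eps then 1 else 0))) //.
  by rewrite sumr_const card_ffun card_ord expn0 mulr1n expr0 invr1 mulr1.
apply: (@le_trans _ _ (E p (M * n.+1) (fun X => 1 - Phi R (X ++ [::])))).
  rewrite E_sub E_const.
  have := E_phi hp q1 hq q0 (M * n.+1) [::].
  have hphi : Phi R ([::] : seq {set 'I_n}) <= 2 ^+ n.
    rewrite /Phi /rk /= mxrank0 subn0; case: ifP => _ //; exact: exprn_ge0.
  have hl : (1 - q / 2) ^+ (M * n.+1) * 2 ^+ n.+1 <= 1.
    apply: powbound => //; first by apply: divr_ge0.
    rewrite ler_pdivrMr // mul1r; apply: (le_trans q1); by rewrite ler1n.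
  have hl0 : 0 <= (1 - q / 2) ^+ (M * n.+1).
    apply: exprn_ge0; rewrite subr_ge0 ler_pdivrMr // mul1r; apply: (le_trans q1); by rewrite ler1n.
  move=> hE.
  have : (1 - q / 2) ^+ (M * n.+1) * Phi R ([::] : seq {set 'I_n}) <= 1 / 2.
    apply: (le_trans (ler_wpM2l hl0 hphi)).
    move: hl; rewrite exprS; set a := (1 - q / 2) ^+ (M * n.+1); set b := (2:R) ^+ n.
    move=> hl; lra.
  lra.
apply: E_mono => // X.
case: (boolP (rk R (X ++ [::]) < n)%N) => h.
  have : 1 <= Phi R (X ++ [::]) by rewrite /Phi h; apply: exprn_ege1; rewrite ler1n.
  case: ifP => _; lra.
rewrite learn_correct //; last by rewrite cats0 in h.
have := @Phi_ge0 R n (X ++ [::]); lra.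
Qed.
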